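(* Let $G$ be a group, $U$ a nonlocal vertex algebra on which $G$ acts by automorphisms, and $V=\coprod_{g\in G}V[g]$ a nonlocal vertex $G$-graded algebra, and let $U\sharp_GV$ be their smash product. Suppose that $K$ is a nonlocal vertex algebra and $\psi:U\to K$, $\phi:V\to K$ are homomorphisms of nonlocal vertex algebras such that $Y(\phi(v),x_1)Y(\psi(u),x_2)=Y(\psi(gu),x_2)Y(\phi(v),x_1)$ for $u\in U$, $v\in V[g]$, $g\in G$. Then there exists a unique nonlocal vertex algebra homomorphism $f:U\sharp_GV\to K$ extending both $\psi$ and $\phi$, i.e. $f(u\otimes\mathbf{1})=\psi(u)$ and $f(\mathbf{1}\otimes v)=\phi(v)$.
   Context: A nonlocal vertex algebra is a complex vector space $V$ with vector $\mathbf{1}$ and linear $Y:V\to\mathrm{Hom}(V,V((x)))$, $Y(v,x)=\sum_nv_nx^{-n-1}$, with $Y(\mathbf{1},x)v=v$, $Y(v,x)\mathbf{1}\in V[[x]]$ with constant term $v$, and weak associativity $(x_0+x_2)^lY(u,x_0+x_2)Y(v,x_2)w=(x_0+x_2)^lY(Y(u,x_0)v,x_2)w$ for some $l\ge0$; homomorphisms preserve $\mathbf{1}$ and $Y$. A nonlocal vertex $G$-graded algebra ($e$ the identity of $G$) is a nonlocal vertex algebra $V=\coprod_gV[g]$ with $\mathbf{1}\in V[e]$ and $Y(u,x)v\in V[gh]((x))$ for $u\in V[g]$, $v\in V[h]$. The smash product $U\sharp_GV$ is $U\otimes V$ with vacuum $\mathbf{1}\otimes\mathbf{1}$ and vertex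 operators $Y_\sharp(u\otimes v,x)(u'\otimes v')=Y(u,x)g(u')\otimes Y(v,x)v'$ for $u,u'\in U$, $v\in V[g]$, $v'\in V$; it is a nonlocal vertex algebra containing $U\cong U\otimes\mathbf{1}$ and $V\cong\mathbf{1}\otimes V$ as subalgebras. *)

(* Defs.v *)
From HB Require Import structures.
From mathcomp Require Import all_boot all_order all_algebra.
From mathcomp Require Import complex Rstruct.
Set Implicit Arguments. Unset Strict Implicit. Unset Printing Implicit Defensive.
Import Order.TTheory GRing.Theory Num.Theory.
Local Open Scope ring_scope.

Definition Cx : fieldType := Rdefinitions.R[i].

Definition binC (k : int) (i : nat) : Cx :=
  (\prod_(j < i) (k%:~R - j%:R)) / (i`!)%:R.

Definition has_zsum (T : zmodType) (F : int -> T) (s : T) : Prop :=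
  exists N : nat, (forall j : int, (N%:Z <= `|j|)%R -> F j = 0) /\
    s = \sum_(i < (2 * N).+1) F (i%:Z - N%:Z).

Definition has_nsum (T : zmodType) (F : nat -> T) (s : T) : Prop :=
  exists N : nat, (forall i : nat, (N <= i)%N -> F i = 0) /\
    s = \sum_(i < N) F i.

(* A "vertex operator map" on V is encoded by its modes:
   Y u v n = u_n v, so that Y(u,x)v = \sum_n (Y u v n) x^{-n-1}. *)
Definition modes (V : lmodType Cx) := V -> V -> int -> V.

(* Y : V -> Hom(V, V((x))) linear, values are lower-truncated Laurent series. *)
Definition vo_linear (V : lmodType Cx) (Y : modes V) : Prop :=
  (forall (a : Cx) (u1 u2 v : V) (n : int),
      Y (a *: u1 + u2) v n = a *: Y u1 v n + Y u2 v n) /\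
  (forall (a : Cx) (u v1 v2 : V) (n : int),
      Y u (a *: v1 + v2) n = a *: Y u v1 n + Y u v2 n).

Definition vo_truncated (V : lmodType Cx) (Y : modes V) : Prop :=
  forall u v : V, exists N : int, forall n : int, N <= n -> Y u v n = 0.

(* Coefficient of x0^a x2^b in (x0+x2)^l Y(u,x0+x2) Y(v,x2) w
   (binomial expansion in nonnegative powers of x2) is the (finite) sum
   \sum_{i>=0} binom(i+a, i) u_{l-1-i-a} v_{i-b-1} w. *)
Definition wa_lhs_term (V : lmodType Cx) (Y : modes V) (l : nat) (u v w : V)
  (a b : int) (i : nat) : V :=
  binC (i%:Z + a) i *: Y u (Y v w (i%:Z - b - 1)) (l%:Z - 1 - i%:Z - a).

(* Coefficient of x0^a x2^b in (x0+x2)^l Y(Y(u,x0)v,x2) w. *)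
Definition wa_rhs (V : lmodType Cx) (Y : modes V) (l : nat) (u v w : V)
  (a b : int) : V :=
  \sum_(t < l.+1) ('C(l, t))%:R *: Y (Y u v (l%:Z - t%:Z - a - 1)) w (t%:Z - b - 1).

Definition weak_assoc (V : lmodType Cx) (Y : modes V) : Prop :=
  forall u v w : V, exists l : nat, forall a b : int,
    has_nsum (wa_lhs_term Y l u v w a b) (wa_rhs Y l u v w a b).

Definition is_nva (V : lmodType Cx) (vac : V) (Y : modes V) : Prop :=
  [/\ vo_linear Y, vo_truncated Y,
      (forall (v : V) (n : int), Y vac v n = if n == -1 then v else 0),
      (* Y(v,x)1 in V[[x]] with constant term v *)
      (forall (v : V) (n : int), 0 <= n -> Y v vac n = 0) /\
      (forall v : V, Y v vac (-1) = v)
    & weak_assoc Y].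

Definition is_linear_map (V W : lmodType Cx) (f : V -> W) : Prop :=
  forall (a : Cx) (u v : V), f (a *: u + v) = a *: f u + f v.

Definition is_nva_hom (V : lmodType Cx) (vacV : V) (YV : modes V)
  (W : lmodType Cx) (vacW : W) (YW : modes W) (f : V -> W) : Prop :=
  [/\ is_linear_map f, f vacV = vacW &
      forall (u v : V) (n : int), f (YV u v n) = YW (f u) (f v) n].

Definition is_group (G : Type) (mul : G -> G -> G) (e : G) (inv : G -> G) : Prop :=
  [/\ forall x y z, mul x (mul y z) = mul (mul x y) z,
      forall x, mul e x = x, forall x, mul x e = x,
      forall x, mul (inv x) x = e & forall x, mul x (inv x) = e].

Definition is_aut_action (G : Type) (mul : G -> G -> G) (e : G)
  (U : lmodType Cx) (vacU : U) (YU : modes U) (act : G -> U -> U) : Prop :=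
  [/\ forall g, is_nva_hom vacU YU vacU YU (act g),
      forall g, bijective (act g),
      forall u, act e u = u &
      forall g h u, act (mul g h) u = act g (act h u)].

Definition is_subspace (V : lmodType Cx) (P : V -> Prop) : Prop :=
  P 0 /\ forall (a : Cx) (u v : V), P u -> P v -> P (a *: u + v).

Definition is_direct_sum_decomp (G : Type) (V : lmodType Cx) (Vg : G -> V -> Prop)
  : Prop :=
  [/\ forall g, is_subspace (Vg g),
      (forall v : V, exists s : seq (G * V),
          List.Forall (fun p => Vg p.1 p.2) s /\ v = \sum_(p <- s) p.2) &
      (forall s : seq (G * V), List.NoDup (map fst s) ->
          List.Forall (fun p => Vg p.1 p.2) s -> \sum_(p <- s) p.2 = 0 ->
          List.Forall (fun p => p.2 = 0) s)].

Definition is_graded_nva (G : Type) (mul : G -> G -> G) (e : G)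
  (V : lmodType Cx) (vacV : V) (YV : modes V) (Vg : G -> V -> Prop) : Prop :=
  [/\ is_nva vacV YV, is_direct_sum_decomp Vg, Vg e vacV &
      forall (g h : G) (u v : V) (n : int), Vg g u -> Vg h v -> Vg (mul g h) (YV u v n)].

Definition is_bilinear (U V W : lmodType Cx) (b : U -> V -> W) : Prop :=
  (forall (a : Cx) u1 u2 v, b (a *: u1 + u2) v = a *: b u1 v + b u2 v) /\
  (forall (a : Cx) u v1 v2, b u (a *: v1 + v2) = a *: b u v1 + b u v2).

Definition is_tensor_product (U V T : lmodType Cx) (tens : U -> V -> T) : Prop :=
  is_bilinear tens /\
  forall (W : lmodType Cx) (b : U -> V -> W), is_bilinear b ->
    (exists h : T -> W, is_linear_map h /\ forall u v, h (tens u v) = b u v) /\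
    (forall h1 h2 : T -> W, is_linear_map h1 -> is_linear_map h2 ->
       (forall u v, h1 (tens u v) = b u v) -> (forall u v, h2 (tens u v) = b u v) ->
       forall t, h1 t = h2 t).

(* Vertex operators of the smash product U #_G V on T = U (x) V:
   Y#(u(x)v, x)(u'(x)v') = Y(u,x) g(u') (x) Y(v,x) v'  for v in V[g],
   i.e. (u(x)v)_n (u'(x)v') = \sum_{j+k = n-1} u_j (g u') (x) v_k v'. *)
Definition is_smash_vo (G : Type) (U V : lmodType Cx) (YU : modes U) (YV : modes V)
  (act : G -> U -> U) (Vg : G -> V -> Prop) (T : lmodType Cx) (tens : U -> V -> T)
  (Ysh : modes T) : Prop :=
  vo_linear Ysh /\
  forall (g : G) (u u' : U) (v v' : V) (n : int), Vg g v ->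
    has_zsum (fun j : int => tens (YU u (act g u') j) (YV v v' (n - 1 - j)))
             (Ysh (tens u v) (tens u' v') n).

(* Main.v *)
Require Import Defs.
From HB Require Import structures.
From mathcomp Require Import all_boot all_order all_algebra.
From mathcomp Require Import zify ring complex Rstruct.
Import Order.TTheory GRing.Theory Num.Theory.
Set Implicit Arguments. Unset Strict Implicit. Unset Printing Implicit Defensive.
Local Open Scope ring_scope.

Lemma lin0 (V W : lmodType Cx) (f : V -> W) : is_linear_map f -> f 0 = 0.
Proof.
move=> H; have h := H 1 0 0; rewrite !scale1r addr0 in h.
by apply: (addrI (f 0)); rewrite addr0 -h.
Qed.

Lemma linD (V W : lmodType Cx) (f : V -> W) : is_linear_map f ->
  forall x y, f (x + y) = f x + f y.
Proof. by move=> H x y; have := H 1 x y; rewrite !scale1r. Qed.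

Lemma linZ (V W : lmodType Cx) (f : V -> W) : is_linear_map f ->
  forall a x, f (a *: x) = a *: f x.
Proof. by move=> H a x; have := H a x 0; rewrite !addr0 (lin0 H) addr0. Qed.

Lemma lin_sum (V W : lmodType Cx) (f : V -> W) : is_linear_map f ->
  forall n (F : 'I_n -> V), f (\sum_(i < n) F i) = \sum_(i < n) f (F i).
Proof.
move=> H; elim=> [|n IH] F; first by rewrite !big_ord0 (lin0 H).
by rewrite !big_ord_recr /= (linD H) IH.
Qed.

Lemma lin_sum_seq (V W : lmodType Cx) (f : V -> W) : is_linear_map f ->
  forall (I : Type) (s : seq I) (F : I -> V),
  f (\sum_(i <- s) F i) = \sum_(i <- s) f (F i).
Proof.
move=> H I; elim=> [|x s IH] F; first by rewrite !big_nil (lin0 H).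
by rewrite !big_cons (linD H) IH.
Qed.

Lemma Ylin1 (V : lmodType Cx) (Y : modes V) : vo_linear Y ->
  forall v n, is_linear_map (fun u => Y u v n).
Proof. by case=> H1 _ v n a x y; apply: H1. Qed.

Lemma Ylin2 (V : lmodType Cx) (Y : modes V) : vo_linear Y ->
  forall u n, is_linear_map (fun v => Y u v n).
Proof. by case=> _ H2 u n a x y; apply: H2. Qed.

Lemma Y0l (V : lmodType Cx) (Y : modes V) : vo_linear Y -> forall v n, Y 0 v n = 0.
Proof. by move=> H v n; exact: (lin0 (Ylin1 H v n)). Qed.

Lemma Y0r (V : lmodType Cx) (Y : modes V) : vo_linear Y -> forall u n, Y u 0 n = 0.
Proof. by move=> H u n; exact: (lin0 (Ylin2 H u n)). Qed.

Lemma tlin1 (U V T : lmodType Cx) (tens : U -> V -> T) : is_bilinear tens ->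
  forall v, is_linear_map (fun u => tens u v).
Proof. by case=> H1 _ v a x y; apply: H1. Qed.

Lemma tlin2 (U V T : lmodType Cx) (tens : U -> V -> T) : is_bilinear tens ->
  forall u, is_linear_map (tens u).
Proof. by case=> _ H2 u a x y; apply: H2. Qed.

Definition wsum (T : zmodType) (lo : int) (len : nat) (F : int -> T) : T :=
  \sum_(k < len) F (lo + k%:Z).

Lemma wsum_sub (T : zmodType) (lo : int) (len : nat) (lo' : int) (len' : nat)
  (F : int -> T) : lo' <= lo -> lo + len%:Z <= lo' + len'%:Z ->
  (forall j, j < lo \/ lo + len%:Z <= j -> F j = 0) ->
  wsum lo' len' F = wsum lo len F.
Proof.
move=> h1 h2 hz.
pose d := absz (lo - lo'); have hd : lo = lo' + d%:Z by rewrite /d; lia.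
pose e := absz (lo' + len'%:Z - (lo + len%:Z))%R.
have he : len' = (d + len + e)%N by rewrite /e /d; lia.
rewrite /wsum he !big_split_ord /=.
rewrite [X in X + _ + _]big1 ?add0r; last by move=> i _; apply: hz; left; case: i => i /= ?; lia.
rewrite [X in _ + X]big1 ?addr0; last by move=> i _; apply: hz; right; case: i => i /= ?; lia.
by apply: eq_bigr => i _; congr F; lia.
Qed.

Lemma wsum_eq (T : zmodType) (lo : int) (len : nat) (lo' : int) (len' : nat)
  (F : int -> T) :
  (forall j, j < lo \/ lo + len%:Z <= j -> F j = 0) ->
  (forall j, j < lo' \/ lo' + len'%:Z <= j -> F j = 0) ->
  wsum lo len F = wsum lo' len' F.
Proof.
move=> z1 z2.
pose L := Num.min lo lo'. pose H := Num.max (lo + len%:Z) (lo' + len'%:Z).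
pose n := absz (H - L)%R.
rewrite -(@wsum_sub _ lo len L n) //; try (rewrite /L /n /H; lia).
rewrite -(@wsum_sub _ lo' len' L n) //; rewrite /L /n /H; lia.
Qed.

Lemma YDl (V : lmodType Cx) (Y : modes V) : vo_linear Y ->
  forall x y v n, Y (x + y) v n = Y x v n + Y y v n.
Proof. by move=> H x y v n; exact: (linD (Ylin1 H v n)). Qed.

Lemma YDr (V : lmodType Cx) (Y : modes V) : vo_linear Y ->
  forall u x y n, Y u (x + y) n = Y u x n + Y u y n.
Proof. by move=> H u x y n; exact: (linD (Ylin2 H u n)). Qed.

Lemma tD1 (U V T : lmodType Cx) (tens : U -> V -> T) : is_bilinear tens ->
  forall x y v, tens (x + y) v = tens x v + tens y v.
Proof. by move=> H x y v; exact: (linD (tlin1 H v)). Qed.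

Lemma tD2 (U V T : lmodType Cx) (tens : U -> V -> T) : is_bilinear tens ->
  forall u x y, tens u (x + y) = tens u x + tens u y.
Proof. by move=> H u x y; exact: (linD (tlin2 H u)). Qed.

Lemma t01 (U V T : lmodType Cx) (tens : U -> V -> T) : is_bilinear tens ->
  forall v, tens 0 v = 0.
Proof. by move=> H v; exact: (lin0 (tlin1 H v)). Qed.

Lemma t02 (U V T : lmodType Cx) (tens : U -> V -> T) : is_bilinear tens ->
  forall u, tens u 0 = 0.
Proof. by move=> H u; exact: (lin0 (tlin2 H u)). Qed.

Definition Pb (k : int) (i : nat) : Cx := \prod_(j < i) (k%:~R - j%:R).

Lemma Pb_recl k i : Pb k i.+1 = k%:~R * Pb (k - 1) i.
Proof.
rewrite /Pb big_ord_recl /= subr0; congr (_ * _); apply: eq_bigr => j _.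
rewrite /bump /= rmorphB /= natrD; ring.
Qed.

Lemma Pb_recr k i : Pb k i.+1 = Pb k i * (k%:~R - i%:R).
Proof. by rewrite /Pb big_ord_recr. Qed.

Lemma natC_neq0 (n : nat) : (n.+1%:R : Cx) != 0.
Proof. have: (n.+1%:R : Rdefinitions.R[i]) != 0 by rewrite pnatr_eq0. exact. Qed.

Lemma fact_neq0 (n : nat) : ((n`!)%:R : Cx) != 0.
Proof. by have := fact_gt0 n; case: (n`!) => // m _; exact: natC_neq0. Qed.

Lemma binC0 k : binC k 0 = 1.
Proof. by rewrite /binC big_ord0 fact0 divr1. Qed.

Lemma binC_pascal k i : binC k i.+1 = binC (k - 1) i.+1 + binC (k - 1) i.
Proof.
rewrite /binC -/(Pb k i.+1) -/(Pb (k-1) i.+1) -/(Pb (k-1) i).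
rewrite Pb_recl Pb_recr factS natrM.
have h1 := natC_neq0 i; have h2 := fact_neq0 i.
rewrite rmorphB /=. field. by rewrite h2 addrC natr1 h1.
Qed.

Lemma binC_diag (i : nat) : binC i%:Z i = 1.
Proof.
rewrite /binC -/(Pb i%:Z i).
suff -> : Pb i%:Z i = (i`!)%:R by rewrite divff // fact_neq0.
elim: i => [|i IH]; first by rewrite /Pb big_ord0.
rewrite Pb_recl factS natrM.
have -> : (i.+1%:Z - 1) = i%:Z by lia.
by rewrite IH.
Qed.

Lemma binC_zero (m i : nat) : (m < i)%N -> binC (i%:Z - m%:Z - 1) i = 0.
Proof.
move=> lt; rewrite /binC.
have hj : (i - m.+1 < i)%N by lia.
rewrite (bigD1 (Ordinal hj)) //= .
have -> : ((i%:Z - m%:Z - 1)%:~R : Cx) - (i - m.+1)%:R = 0.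
  have -> : (i%:Z - m%:Z - 1) = (i - m.+1)%N%:Z by lia.
  by rewrite subrr.
by rewrite mul0r mul0r.
Qed.

Lemma nsum_ext (T : zmodType) (F : nat -> T) (N1 N : nat) :
  (forall i, (N1 <= i)%N -> F i = 0) -> (N1 <= N)%N ->
  \sum_(i < N) F i = \sum_(i < N1) F i.
Proof.
move=> z le; rewrite -(subnKC le) big_split_ord /= [X in _ + X]big1 ?addr0 //.
by move=> i _; apply: z; rewrite leq_addr.
Qed.

Lemma wa_rhs_succ (V : lmodType Cx) (Y : modes V) (l : nat) (u v w : V) a b :
  wa_rhs Y l.+1 u v w a b = wa_rhs Y l u v w (a - 1) b + wa_rhs Y l u v w a (b - 1).
Proof.
pose X (t : nat) := Y (Y u v (l%:Z - t%:Z - a)) w (t%:Z - b - 1).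
have e0 : wa_rhs Y l.+1 u v w a b = \sum_(t < l.+2) ('C(l.+1, t))%:R *: X t.
  by apply: eq_bigr => t _; rewrite /X; congr (_ *: Y (Y u v _) w _); lia.
have e1 : wa_rhs Y l u v w (a - 1) b = \sum_(t < l.+1) ('C(l, t))%:R *: X t.
  by apply: eq_bigr => t _; rewrite /X; congr (_ *: Y (Y u v _) w _); lia.
have e2 : wa_rhs Y l u v w a (b - 1) = \sum_(t < l.+1) ('C(l, t))%:R *: X t.+1.
  by apply: eq_bigr => t _; rewrite /X; congr (_ *: Y (Y u v _) w _); lia.
rewrite e0 e1 e2 big_ord_recl.
under eq_bigr => t _ do rewrite lift0 binS natrD scalerDl.
rewrite big_split /= addrA; congr (_ + _).
have E : \sum_(t < l.+2) ('C(l,t))%:R *: X t = \sum_(t < l.+1) ('C(l,t))%:R *: X t.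
  by rewrite big_ord_recr /= (@bin_small l l.+1) // scale0r addr0.
rewrite -E [RHS]big_ord_recl !bin0; congr (_ + _).
Qed.

Lemma wa_succ (V : lmodType Cx) (Y : modes V) (l : nat) (u v w : V) :
  (forall a b, has_nsum (wa_lhs_term Y l u v w a b) (wa_rhs Y l u v w a b)) ->
  forall a b, has_nsum (wa_lhs_term Y l.+1 u v w a b) (wa_rhs Y l.+1 u v w a b).
Proof.
move=> H a b.
have [N1 [z1 e1]] := H (a - 1) b.
have [N2 [z2 e2]] := H a (b - 1).
have t0 : wa_lhs_term Y l.+1 u v w a b 0 = wa_lhs_term Y l u v w (a - 1) b 0.
  by rewrite /wa_lhs_term !binC0; congr (_ *: Y u (Y v w _) _); lia.
have tS : forall i : nat, wa_lhs_term Y l.+1 u v w a b i.+1 =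
   wa_lhs_term Y l u v w (a - 1) b i.+1 + wa_lhs_term Y l u v w a (b - 1) i.
  move=> i; rewrite /wa_lhs_term binC_pascal scalerDl.
  by congr (binC _ _ *: Y u (Y v w _) _ + binC _ _ *: Y u (Y v w _) _); lia.
have [N' hN] : exists N', maxn N1 N2.+1 = N'.+1.
  by exists (maxn N1 N2.+1).-1; lia.
exists N'.+1; split.
  case=> [|i] hi; first lia.
  by rewrite tS z1 ?z2 ?addr0 //; lia.
rewrite big_ord_recl t0.
under eq_bigr => i _ do rewrite lift0 tS.
rewrite big_split /= addrA wa_rhs_succ e1 e2.
congr (_ + _).
  rewrite -(@nsum_ext _ _ N1 N'.+1) //; last by lia.
  by rewrite big_ord_recl; congr (_ + _); apply: eq_bigr => i _; rewrite lift0.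
by rewrite (@nsum_ext _ _ N2 N') //; lia.
Qed.

Lemma wa_add (V : lmodType Cx) (Y : modes V) (l : nat) (u v w : V) :
  (forall a b, has_nsum (wa_lhs_term Y l u v w a b) (wa_rhs Y l u v w a b)) ->
  forall d : nat, forall a b,
    has_nsum (wa_lhs_term Y (l + d) u v w a b) (wa_rhs Y (l + d) u v w a b).
Proof.
move=> H; elim=> [|d IH]; first by rewrite addn0.
by rewrite addnS; apply: wa_succ.
Qed.

Lemma assoc_trunc (K : lmodType Cx) (vac : K) (Y : modes K) :
  is_nva vac Y -> forall (a b c : K) (M N : int),
  (forall m k, M <= m \/ N <= k -> Y a (Y b c k) m = 0) ->
  forall n : int, exists l N' : nat, M <= l%:Z /\
    (forall i : nat, (N' <= i)%N ->
        Y a (Y b c (i%:Z - l%:Z + n)) (l%:Z - 1 - i%:Z) = 0) /\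
    Y (Y a b (-1)) c n =
      \sum_(i < N') Y a (Y b c (i%:Z - l%:Z + n)) (l%:Z - 1 - i%:Z).
Proof.
move=> [Hlin Htr Hvac Hvac2 Hwa] a b c M N J n.
have [l0 Hl0] := Hwa a b c.
pose l := (l0 + absz M)%N.
have Hl : forall al be, has_nsum (wa_lhs_term Y l a b c al be) (wa_rhs Y l a b c al be).
  exact: wa_add Hl0 (absz M).
have lM : M <= l%:Z by rewrite /l; lia.
have [M0 HM0] := Htr a b.
have S1 : forall (m : nat) p, Y (Y a b m%:Z) c p = 0.
  pose K0 := absz M0.
  suff H : forall D m, (K0 - m <= D)%N -> forall p, Y (Y a b m%:Z) c p = 0.
    by move=> m; apply: (H (K0 - m)%N).
  elim=> [|D IH] m hm p.
    by rewrite HM0 ?(Y0l Hlin) //; rewrite /K0; lia.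
  case: (leqP (K0 - m) D) => hD; first by apply: IH.
  have [N' [z e]] := Hl (- m%:Z - 1) (l%:Z - p - 1).
  have sum0 : \sum_(i < N') wa_lhs_term Y l a b c (- m%:Z - 1) (l%:Z - p - 1) i = 0.
    apply: big1 => i _; rewrite /wa_lhs_term.
    case: (ltnP m i) => hi.
      have -> : (i%:Z + (- m%:Z - 1)) = i%:Z - m%:Z - 1 by lia.
      by rewrite binC_zero // scale0r.
    by rewrite J ?scaler0 //; left; lia.
  move: e; rewrite sum0 /wa_rhs big_ord_recr /= big1.
    rewrite add0r binn scale1r => <-; congr (Y (Y a b _) c _); lia.
  move=> t _.
  have -> : (l%:Z - t%:Z - (- m%:Z - 1) - 1) = (m + (l - t))%N%:Z.
    by have := ltn_ord t; lia.
  by rewrite IH ?scaler0 //; have := ltn_ord t; lia.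
have [N' [z e]] := Hl 0 (l%:Z - n - 1).
exists l, N'; split => //; split.
  move=> i hi; have := z i hi; rewrite /wa_lhs_term addr0 binC_diag scale1r => <-.
  by congr (Y a (Y b c _) _); lia.
move: e; rewrite /wa_rhs big_ord_recr /= big1.
  rewrite add0r binn scale1r => E.
  have -> : Y (Y a b (-1)) c n =
     Y (Y a b (l%:Z - l%:Z - 0 - 1)) c (l%:Z - (l%:Z - n - 1) - 1).
    by congr (Y (Y a b _) c _); lia.
  rewrite E; apply: eq_bigr => i _.
  by rewrite /wa_lhs_term addr0 binC_diag scale1r; congr (Y a (Y b c _) _); lia.
move=> t _.
have -> : (l%:Z - t%:Z - 0 - 1) = (l - t.+1)%N%:Z by have := ltn_ord t; lia.
by rewrite S1 scaler0.
Qed.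

Theorem proposition2p15
  (G : Type) (mulG : G -> G -> G) (e : G) (invG : G -> G)
  (HG : is_group mulG e invG)
  (U : lmodType Cx) (vacU : U) (YU : modes U) (HU : is_nva vacU YU)
  (act : G -> U -> U) (Hact : is_aut_action mulG e vacU YU act)
  (V : lmodType Cx) (vacV : V) (YV : modes V) (Vg : G -> V -> Prop)
  (HV : is_graded_nva mulG e vacV YV Vg)
  (T : lmodType Cx) (tens : U -> V -> T) (HT : is_tensor_product tens)
  (Ysh : modes T) (HYsh : is_smash_vo YU YV act Vg tens Ysh)
  (K : lmodType Cx) (vacK : K) (YK : modes K) (HK : is_nva vacK YK)
  (psi : U -> K) (phi : V -> K)
  (Hpsi : is_nva_hom vacU YU vacK YK psi) (Hphi : is_nva_hom vacV YV vacK YK phi)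
  (Hcomm : forall (g : G) (u : U) (v : V), Vg g v ->
     forall (w : K) (m n : int),
       YK (phi v) (YK (psi u) w n) m = YK (psi (act g u)) (YK (phi v) w m) n) :
  exists f : T -> K,
    [/\ is_nva_hom (tens vacU vacV) Ysh vacK YK f,
        (forall u : U, f (tens u vacV) = psi u),
        (forall v : V, f (tens vacU v) = phi v) &
        (forall f' : T -> K,
           is_nva_hom (tens vacU vacV) Ysh vacK YK f' ->
           (forall u : U, f' (tens u vacV) = psi u) ->
           (forall v : V, f' (tens vacU v) = phi v) ->
           forall t : T, f' t = f t)].
Proof.
have HKnva := HK.
case: HG => Gassoc Gel Ger Ginvl Ginvr.
case: Hact => Ahom Abij Ae Amul.
case: HV => HVnva [HVsub HVdec HVuniq] HVe HVgr.
case: HVnva => VLin VTr VVac [VV0 VV1] VWA.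
case: HT => Hbil Huniv.
case: HYsh => Yshlin Yshf.
case: HK => KLin KTr KVac [KV0 KV1] KWA.
case: HU => ULin UTr UVac [UV0 UV1] UWA.
case: Hpsi => psiL psi1 psiY.
case: Hphi => phiL phi1 phiY.
have actY : forall g x y j, act g (YU x y j) = YU (act g x) (act g y) j.
  by move=> g x y j; case: (Ahom g) => _ _ ->.
have Crev : forall h z, Vg h z -> forall x w m k,
    YK (psi x) (YK (phi z) w k) m = YK (phi z) (YK (psi (act (invG h) x)) w m) k.
  move=> h z Hz x w m k; rewrite (Hcomm h _ z Hz) -Amul Ginvr Ae //.
have P : forall h z, Vg h z -> forall x y j,
    YK (psi x) (YK (psi y) (phi z) (-1)) j = YK (YK (psi x) (psi y) j) (phi z) (-1).
  move=> h z Hz x y j.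
  transitivity (YK (phi z) (YK (psi (act (invG h) x)) (psi (act (invG h) y)) j) (-1)).
    by rewrite -{1}(KV1 (phi z)) (Crev h z Hz y) (Crev h z Hz x) KV1.
  by rewrite -psiY -actY -psiY -{2}(KV1 (phi z)) (Crev h z Hz) KV1.
pose b0 u v := YK (psi u) (phi v) (-1).
have bil : is_bilinear b0.
  split=> a x y z; rewrite /b0.
    by rewrite psiL (proj1 KLin).
  by rewrite phiL (proj2 KLin).
have [f [fL fT]] := (Huniv K b0 bil).1.
have f0 : f 0 = 0 := lin0 fL.
have core : forall g u v, Vg g v -> forall h u' v', Vg h v' -> forall n,
    f (Ysh (tens u v) (tens u' v') n) = YK (f (tens u v)) (f (tens u' v')) n.
  move=> g u v Hv h u' v' Hv' n.
  rewrite !fT /b0.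
  set a := psi u; set b := phi v; set c := YK (psi u') (phi v') (-1).
  pose Tm j := YK a (YK b c (n - 1 - j)) j.
  have TG : forall j, Tm j = f (tens (YU u (act g u') j) (YV v v' (n - 1 - j))).
    move=> j; rewrite fT /b0 /Tm /c /b (Hcomm g u' v Hv) -phiY /a.
    by rewrite (P (mulG g h) _ (HVgr g h v v' _ Hv Hv')) -psiY.
  have [N0 [zN eN]] := Yshf g u u' v v' n Hv.
  have [Nbc Hbc] := KTr b c.
  have [Mac Hac] := KTr (psi (act (invG g) u)) c.
  have J : forall m k, Mac <= m \/ Nbc <= k -> YK a (YK b c k) m = 0.
    move=> m k [hm|hk].
      by rewrite /a /b (Crev g v Hv) Hac // (Y0r KLin).
    by rewrite Hbc // (Y0r KLin).
  have [l [N' [lM [zl el]]]] := assoc_trunc HKnva J n.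
  rewrite el eN (lin_sum fL).
  have E1 : \sum_(i < (2 * N0).+1)
      f (tens (YU u (act g u') (i%:Z - N0%:Z)) (YV v v' (n - 1 - (i%:Z - N0%:Z))))
      = wsum (- N0%:Z) (2 * N0).+1 Tm.
    apply: eq_bigr => i _; rewrite TG.
    by have -> : - N0%:Z + i%:Z = i%:Z - N0%:Z by lia.
  have E2 : \sum_(i < N') YK a (YK b c (i%:Z - l%:Z + n)) (l%:Z - 1 - i%:Z)
      = wsum (l%:Z - N'%:Z) N' Tm.
    rewrite /wsum (reindex_inj rev_ord_inj) /=; apply: eq_bigr => i _; rewrite /Tm.
    by congr (YK a (YK b c _) _); have := ltn_ord i; lia.
  rewrite E1 E2; apply: wsum_eq.
    move=> j hj; rewrite TG.
    have Hz : tens (YU u (act g u') j) (YV v v' (n - 1 - j)) = 0.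
      by apply: (zN j); lia.
    by rewrite Hz f0.
  move=> j [hj|hj].
    have hz := zl (absz (l%:Z - 1 - j)%R) ltac:(lia).
    by rewrite -hz /Tm; congr (YK a (YK b c _) _); lia.
  by rewrite /Tm J //; left; lia.
have fD := linD fL.
have ext2 : forall g u v, Vg g v -> forall u' v' n,
    f (Ysh (tens u v) (tens u' v') n) = YK (f (tens u v)) (f (tens u' v')) n.
  move=> g u v Hv u' v' n.
  have [s [Hfor ->]] := HVdec v'.
  elim: s Hfor => [|[h z] s IH] Hfor.
    by rewrite big_nil (t02 Hbil) (Y0r Yshlin) f0 (Y0r KLin).
  inversion Hfor; subst.
  rewrite big_cons (tD2 Hbil) (YDr Yshlin) !fD (YDr KLin) IH //.
  by rewrite (core g u v Hv h u' z ltac:(assumption) n).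
have ext1 : forall u v u' v' n,
    f (Ysh (tens u v) (tens u' v') n) = YK (f (tens u v)) (f (tens u' v')) n.
  move=> u v u' v' n.
  have [s [Hfor ->]] := HVdec v.
  elim: s Hfor => [|[h z] s IH] Hfor.
    by rewrite big_nil (t02 Hbil) (Y0l Yshlin) f0 (Y0l KLin).
  inversion Hfor; subst.
  rewrite big_cons (tD2 Hbil) (YDl Yshlin) !fD (YDl KLin) IH //.
  by rewrite (ext2 h u z ltac:(assumption) u' v' n).
have stepA : forall u v t' n, f (Ysh (tens u v) t' n) = YK (f (tens u v)) (f t') n.
  move=> u v t' n.
  pose h2 := fun t' => YK (f (tens u v)) (f t') n.
  have L1 : is_linear_map (fun t' => f (Ysh (tens u v) t' n)).
    by move=> a x y; rewrite (proj2 Yshlin) fL.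
  have L2 : is_linear_map h2 by move=> a x y; rewrite /h2 fL (proj2 KLin).
  have B2 : is_bilinear (fun u' v' => h2 (tens u' v')).
    split=> a x y z; rewrite /h2.
      by rewrite (proj1 Hbil) fL (proj2 KLin).
    by rewrite (proj2 Hbil) fL (proj2 KLin).
  exact: ((Huniv K _ B2).2 _ _ L1 L2 (fun u' v' => ext1 u v u' v' n) (fun _ _ => erefl) t').
have stepB : forall t t' n, f (Ysh t t' n) = YK (f t) (f t') n.
  move=> t t' n.
  pose h2 := fun t => YK (f t) (f t') n.
  have L1 : is_linear_map (fun t => f (Ysh t t' n)).
    by move=> a x y; rewrite (proj1 Yshlin) fL.
  have L2 : is_linear_map h2 by move=> a x y; rewrite /h2 fL (proj1 KLin).
  have B2 : is_bilinear (fun u' v' => h2 (tens u' v')).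
    split=> a x y z; rewrite /h2.
      by rewrite (proj1 Hbil) fL (proj1 KLin).
    by rewrite (proj2 Hbil) fL (proj1 KLin).
  exact: ((Huniv K _ B2).2 _ _ L1 L2 (fun u v => stepA u v t' n) (fun _ _ => erefl) t).
exists f; split.
- split => //; by rewrite fT /b0 psi1 phi1 KV1.
- by move=> u; rewrite fT /b0 phi1 KV1.
- by move=> v; rewrite fT /b0 psi1 KVac eqxx.
move=> f' [f'L f'1 f'Y] hu hv t.
have key : forall u v, f' (tens u v) = b0 u v.
  move=> u v.
  have : Ysh (tens u vacV) (tens vacU v) (-1) = tens u v.
    have [N [zN eN]] := Yshf e u vacU vacV v (-1) HVe.
    rewrite eN.
    pose F j := tens (YU u (act e vacU) j) (YV vacV v (-1 - 1 - j)).
    transitivity (wsum (- N%:Z) (2 * N).+1 F).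
      rewrite /wsum; apply: eq_bigr => i _; rewrite /F.
      by have -> : - N%:Z + i%:Z = i%:Z - N%:Z by lia.
    rewrite (@wsum_eq _ _ _ (-1) 1).
    - rewrite /wsum big_ord1 /F /= addr0 Ae VVac.
      by have -> : (-1 - 1 - -1 : int) = -1 by []; rewrite eqxx UV1.
    - by move=> j hj; rewrite /F; apply: zN; lia.
    - move=> j hj; rewrite /F VVac.
      have -> : (-1 - 1 - j == -1) = false by apply/eqP; lia.
      exact: (t02 Hbil).
  by move=> H; rewrite -H f'Y hu hv.
exact: ((Huniv K b0 bil).2 f' f f'L fL key fT).
Qed.
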